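(* Let $T$ be a decomposition tree of a distance-hereditary graph $G$, and let $v$ be an internal node of $T$ labeled $\oplus$ with left child $v_l$ and right child $v_r$, such that property (P) holds at $v_l$ and at $v_r$. Assume that $\hat\alpha(v_r)\le\hat\beta(v_l)$, and that neither ($\hat\alpha(v_l)=\hat\beta(v_r)=0$) nor ($\hat\alpha(v_r)=\hat\beta(v_l)=0$) holds. Then $$\hat\alpha(v)=\begin{cases}\hat\alpha(v_l)-\hat\beta(v_r) & \text{if } \hat\alpha(v_l)>\hat\beta(v_r),\\ |\hat\alpha(v_l)-\hat\alpha(v_r)|\bmod 2 & \text{otherwise.}\end{cases}$$
   Context: All graphs are finite, simple, undirected. For a graph $H$ and $S\subseteq V(H)$, $N_H[S]$ is $S$ together with all vertices adjacent to a vertex of $S$, and $H[S]$ is the induced subgraph. Graphs carry a ''twin set'': a single-vertex graph on $x$ has twin set $\{x\}$. For vertex-disjoint graphs $G_l,G_r$ with twin sets $TS(G_l),TS(G_r)$: the true twin operation $G_l\otimes G_r$ has vertex set $V(G_l)\cup V(G_r)$, edge set $E(G_l)\cup E(G_r)\cup\{uw: u\in TS(G_l), w\in TS(G_r)\}$ and twin set $TS(G_l)\cup TS(G_r)$; the false twin operation $G_l\odot G_r$ has vertex set $V(G_l)\cup V(G_r)$, edge set $E(G_l)\cup E(G_r)$, twin set $TS(G_l)\cup TS(G_r)$; the attachment operation $G_l\oplus G_r$ has the same vertex and edge sets as $G_l\otimes G_r$ and twin set $TS(G_l)$. A decomposition tree $T$ of $G$ is a rooted binary tree whose leaves are in bijection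 with $V(G)$, each internal node having a left and a right child and a label in $\{\otimes,\odot,\oplus\}$; for each node $v$ define $\hat G(v)$ and $\hat{TS}(v)$ recursively: for a leaf $x$, the single-vertex graph on $x$ with twin set $\{x\}$; for an internal node $v$ with label $\circ$ and children $v_l,v_r$, $\hat G(v)=\hat G(v_l)\circ\hat G(v_r)$ with the corresponding twin set; one requires $\hat G(\text{root})=G$. Then $\hat G(v)$ is the subgraph of $G$ induced by the set $\hat V(v)$ of leaves below $v$. For a node $u$ and $0\le k\le|\hat{TS}(u)|$, call $S\subseteq\hat V(u)$ $k$-feasible if $\hat V(u)\setminus\hat{TS}(u)\subseteq N_{\hat G(u)}[S]$ and there is $X\subseteq S\cap\hat{TS}(u)$ with $|X|=k$ such that $\hat G(u)[S\setminus X]$ has a perfect matching. $\hat\gamma_k(u)$ is the minimum size of a $k$-feasible set. $\hat{min}(u)=\min\{\hat\gamma_k(u):0\le k\le|\hat{TS}(u)|\}$, and $\hat\alpha(u)$, $\hat\beta(u)$ are the smallest and the largest $k$ with $\hat\gamma_k(u)=\hat{min}(u)$. Property (P) holds at $u$ if for every $0\le k\le|\hat{TS}(u)|$: $\hat\gamma_k(u)=\hat{min}(u)+\hat\alpha(u)-k$ when $k\le\hat\alpha(u)$; $\hat\gamma_k(u)=\hat{min}(u)+k-\hat\beta(u)$ when $k\ge\hat\beta(u)$; $\hat\gamma_k(u)=\hat{min}(u)$ when $\hat\alpha(u)<k<\hat\beta(u)$ and $k-\hat\alpha(u)$ is even; and $\hat\gamma_k(u)=\hat{min}(u)+1$ otherwise.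 *)

(* Defs.v *)
From mathcomp Require Import all_boot.
Set Implicit Arguments. Unset Strict Implicit. Unset Printing Implicit Defensive.

Inductive op := OTrue (* true twin, ⊗ *) | OFalse (* false twin, ⊙ *) | OAttach (* attachment, ⊕ *).

Inductive dtree (V : Type) := Leaf of V | Node of op & dtree V & dtree V.
Arguments Leaf {V}. Arguments Node {V}.

Section DT.
Variable V : finType.

Fixpoint hV (t : dtree V) : {set V} :=
  match t with Leaf x => [set x] | Node _ l r => hV l :|: hV r end.

Fixpoint hTS (t : dtree V) : {set V} :=
  match t with
  | Leaf x => [set x]
  | Node OAttach l r => hTS l
  | Node _ l r => hTS l :|: hTS r
  end.

Fixpoint hE (t : dtree V) (u w : V) : bool :=
  match t with
  | Leaf _ => false
  | Node OFalse l r => hE l u w || hE r u w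
  | Node _ l r => [|| hE l u w, hE r u w,
                     (u \in hTS l) && (w \in hTS r) | (u \in hTS r) && (w \in hTS l)]
  end.

(* the operations are applied to vertex-disjoint graphs (leaves in bijection) *)
Fixpoint wf_tree (t : dtree V) : bool :=
  match t with
  | Leaf _ => true
  | Node _ l r => [&& wf_tree l, wf_tree r & [disjoint hV l & hV r]]
  end.

Fixpoint is_node (v T : dtree V) : Prop :=
  v = T \/ match T with Leaf _ => False | Node _ l r => is_node v l \/ is_node v r end.

Definition simple_graph (e : rel V) := symmetric e /\ irreflexive e.

Definition decomp_tree (e : rel V) (T : dtree V) :=
  [/\ wf_tree T, hV T = [set: V] & forall u w, e u w = hE T u w].

Fixpoint ball (e : rel V) (S : {set V}) (k : nat) (u : V) : {set V} :=
  match k with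
  | 0 => [set u]
  | k'.+1 => ball e S k' u :|: [set y in S | [exists x in ball e S k' u, e x y]]
  end.

Definition connected_in (e : rel V) (S : {set V}) :=
  forall u w, u \in S -> w \in S -> exists k, w \in ball e S k u.

(* distance-hereditary: in every connected induced subgraph, distances equal those in G *)
Definition distance_hereditary (e : rel V) :=
  forall S : {set V}, connected_in e S ->
  forall u w k, u \in S -> w \in S -> (w \in ball e S k u) = (w \in ball e setT k u).

Definition closed_nbhd (t : dtree V) (S : {set V}) : {set V} :=
  [set x in hV t | (x \in S) || [exists y in S, hE t x y]].

Definition has_perfect_matching (e : rel V) (A : {set V}) : bool :=
  [exists M : {set {set V}}, partition M A &&
    [forall m in M, exists a, exists b, [&& a != b, e a b & m == [set a; b]]]].

Definition kfeasible (t : dtree V) (k : nat) (S : {set V}) : bool :=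
  [&& S \subset hV t, (hV t :\: hTS t) \subset closed_nbhd t S &
      [exists X : {set V}, [&& X \subset S :&: hTS t, #|X| == k &
                              has_perfect_matching (hE t) (S :\: X)]]].

(* \hat\gamma_k(t): minimum size of a k-feasible set; #|V|.+1 encodes "infinity" *)
Definition hgamma (t : dtree V) (k : nat) : nat :=
  \big[minn/#|V|.+1]_(S : {set V} | kfeasible t k S) #|S|.

Definition hmin (t : dtree V) : nat :=
  \big[minn/#|V|.+1]_(k < #|hTS t|.+1) hgamma t k.

Definition halpha (t : dtree V) : nat :=
  \big[minn/#|hTS t|]_(k < #|hTS t|.+1 | hgamma t k == hmin t) (k : nat).

Definition hbeta (t : dtree V) : nat :=
  \max_(k < #|hTS t|.+1 | hgamma t k == hmin t) (k : nat).

Definition propP (t : dtree V) : Prop :=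
  forall k, k <= #|hTS t| ->
  [/\ k <= halpha t -> hgamma t k = hmin t + halpha t - k,
      hbeta t <= k -> hgamma t k = hmin t + k - hbeta t,
      halpha t < k < hbeta t -> ~~ odd (k - halpha t) -> hgamma t k = hmin t &
      halpha t < k < hbeta t -> odd (k - halpha t) -> hgamma t k = hmin t + 1].

End DT.

(* Main.v *)
Require Import Defs.
From mathcomp Require Import all_boot zify.
Set Implicit Arguments. Unset Strict Implicit. Unset Printing Implicit Defensive.
Lemma par1 a b : odd a = ~~ odd b -> b < a -> odd (a - 1) = odd b.
Proof. lia. Qed.
Lemma par2 a b c : odd c = odd a -> odd a = ~~ odd b -> a < b -> b <= c -> b + 1 <= c.
Proof. lia. Qed.
Lemma par0 b : odd b = false -> b <> 0 -> 2 <= b.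
Proof. lia. Qed.
Lemma par3 a b : odd a = ~~ odd b -> odd (b + 1) = odd a.
Proof. lia. Qed.
Lemma par4 a b : odd a = odd b -> (if a <= b then b - a else a - b) %% 2 = 0.
Proof. case: leqP; lia. Qed.
Lemma par5 a b : odd a = ~~ odd b -> (if a <= b then b - a else a - b) %% 2 = 1.
Proof. case: leqP; lia. Qed.

Lemma bigmin_le_seq (I : eqType) (r : seq I) (P : pred I) (F : I -> nat) x i :
  i \in r -> P i -> \big[minn/x]_(j <- r | P j) F j <= F i.
Proof.
elim: r => // j r IH; rewrite in_cons big_cons => /orP[/eqP<- ->|ir Pi].
  exact: geq_minl.
have := IH ir Pi; case: (P j) => // H; exact: leq_trans (geq_minr _ _) H.
Qed.

Lemma bigmin_le (I : finType) (P : pred I) (F : I -> nat) x i :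
  P i -> \big[minn/x]_(i | P i) F i <= F i.
Proof. by move=> Pi; apply: bigmin_le_seq => //; rewrite mem_index_enum. Qed.

Lemma bigmin_le_idx (I : finType) (P : pred I) (F : I -> nat) x :
  \big[minn/x]_(i | P i) F i <= x.
Proof.
elim/big_rec: _ => // i y _ H; exact: leq_trans (geq_minr _ _) H.
Qed.

Lemma bigmin_geq (I : finType) (P : pred I) (F : I -> nat) x n :
  (forall i, P i -> n <= F i) -> n <= x -> n <= \big[minn/x]_(i | P i) F i.
Proof.
move=> H Hx; elim/big_rec: _ => // i y Pi Hy.
by rewrite leq_min H.
Qed.

Lemma bigmin_att (I : finType) (P : pred I) (F : I -> nat) x :
  \big[minn/x]_(i | P i) F i = x \/ exists i, P i /\ \big[minn/x]_(i | P i) F i = F i.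
Proof.
elim/big_rec: _ => [|i y Pi IH]; first by left.
rewrite /=; case: (leqP (F i) y) => H.
  by right; exists i; split => //; apply/minn_idPl.
idtac.
exact: IH.
Qed.

Section PM.
Variable V : finType.

Definition invol (E : rel V) (A : {set V}) (p : V -> V) :=
  forall x, x \in A -> [/\ p x \in A, p x != x, E x (p x) & p (p x) = x].

Lemma two_el (a b z y w : V) : a != b -> z \in [set a; b] -> y \in [set a; b] -> y != z ->
  w \in [set a; b] -> w = z \/ w = y.
Proof.
rewrite !inE => ab /orP[]/eqP-> /orP[]/eqP-> //; rewrite ?eqxx //;
  move=> _ /orP[]/eqP->; auto.
Qed.

Lemma pm_invol E A : symmetric E -> has_perfect_matching E A -> exists p, invol E A p.
Proof.
move=> Esym /existsP[M /andP[/and3P[/eqP cov tI n0] /forallP H]].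
pose p x := odflt x [pick y in pblock M x | y != x].
have key : forall z, z \in A -> exists a b, [/\ a != b, E a b, pblock M z = [set a; b],
    p z \in pblock M z & p z != z].
  move=> z zA; have zc : z \in cover M by rewrite cov.
  have PM := pblock_mem zc.
  have zin : z \in pblock M z by rewrite mem_pblock.
  have /implyP/(_ PM) /existsP[a /existsP[b /and3P[ab eab /eqP mab]]] := H (pblock M z).
  have pz : p z \in pblock M z /\ p z != z.
    rewrite /p; case: pickP => [y /andP[yB yz] //|none].
    exfalso; have na := none a; have nb := none b; rewrite /= mab !inE !eqxx ?orbT /= in na nb.
    by move: ab; rewrite (eqP (negbFE na)) (eqP (negbFE nb)) eqxx.
  by case: pz => ? ?; exists a, b; split.
exists p => z zA.
have [a [b [ab eab mab pzB pzz]]] := key z zA.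
have zB : z \in pblock M z by rewrite mem_pblock cov.
have pzA : p z \in A by rewrite -cov; apply/bigcupP; exists (pblock M z) => //; apply: pblock_mem; rewrite cov.
split => //.
- move: zB pzB; rewrite mab !inE => /orP[]/eqP zE /orP[]/eqP pE; rewrite pE zE ?eqxx // in pzz *.
  by rewrite Esym.
- have [a' [b' [ab' _ mab' ppB ppz]]] := key (p z) pzA.
  have same : pblock M (p z) = pblock M z by apply: same_pblock.
  rewrite same in ppB.
  rewrite mab in zB pzB ppB.
  have [//|e] := two_el ab zB pzB pzz ppB.
  by move: ppz; rewrite e eqxx.
Qed.

Lemma invol_pm E A p : invol E A p -> has_perfect_matching E A.
Proof.
move=> H.
have blk : forall x z, x \in A -> z \in [set x; p x] -> [set x; p x] = [set z; p z].
  move=> x z xA; rewrite !inE => /orP[]/eqP-> //.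
  have [_ _ _ ->] := H x xA; exact: setUC.
apply/existsP; exists [set [set x; p x] | x in A]; apply/andP; split.
  apply/and3P; split.
  - apply/eqP/setP => y; apply/bigcupP/idP.
      case=> B /imsetP[x xA ->]; rewrite !inE => /orP[]/eqP-> //.
      by have [] := H x xA.
    by move=> yA; exists [set y; p y]; [apply: imset_f | rewrite !inE eqxx].
  - apply/trivIsetP => B1 B2 /imsetP[x xA ->] /imsetP[y yA ->] neq.
    apply/pred0P => z /=; apply/negbTE/negP => /andP[z1 z2].
    by move: neq; rewrite (blk x z) // (blk y z) // eqxx.
  - apply/negP => /imsetP[x xA] /setP /(_ x); rewrite !inE eqxx.
    done.
apply/forallP => m; apply/implyP => /imsetP[x xA ->].
have [_ pxx exp _] := H x xA.
by apply/existsP; exists x; apply/existsP; exists (p x); rewrite eq_sym pxx exp eqxx.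
Qed.

Lemma pm_even (E : rel V) (A : {set V}) : has_perfect_matching E A -> ~~ odd #|A|.
Proof.
case/existsP => M /andP[pM /forallP H].
rewrite (card_partition pM) (eq_bigr (fun _ => 2)).
  by rewrite sum_nat_const oddM andbF.
move=> m mM; have /implyP/(_ mM)/existsP[a /existsP[b /and3P[ab _ /eqP ->]]] := H m.
by rewrite cards2 ab.
Qed.
End PM.

Section Tree.
Variable V : finType.
Implicit Types (t l r : dtree V) (S X : {set V}).

Definition feas t k S X (p : V -> V) :=
  [/\ S \subset hV t, hV t :\: hTS t \subset closed_nbhd t S, X \subset S :&: hTS t,
      #|X| = k & invol (hE t) (S :\: X) p].

Lemma hE_sym t : symmetric (hE t).
Proof.
elim: t => [x|o l IHl r IHr] u w //=.
case: o => /=; rewrite IHl IHr //.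
- by case: (hE l w u); case: (hE r w u); case: (u \in hTS l); case: (w \in hTS l);
     case: (u \in hTS r); case: (w \in hTS r).
- by case: (hE l w u); case: (hE r w u); case: (u \in hTS l); case: (w \in hTS l);
     case: (u \in hTS r); case: (w \in hTS r).
Qed.

Lemma hTS_sub t : hTS t \subset hV t.
Proof.
elim: t => [x|o l IHl r IHr] //=.
case: o => /=; try by apply: setUSS.
by apply: (subset_trans IHl); apply: subsetUl.
Qed.

Lemma hE_in t u w : hE t u w -> (u \in hV t) && (w \in hV t).
Proof.
elim: t => [x|o l IHl r IHr] //=.
have sl := subsetP (hTS_sub l); have sr := subsetP (hTS_sub r).
case: o => /=; rewrite !inE.
- case/or4P => [/IHl/andP[a b]|/IHr/andP[a b]|/andP[/sl a /sr b]|/andP[/sr a /sl b]];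
    by rewrite a b ?orbT.
- case/orP => [/IHl/andP[a b]|/IHr/andP[a b]];
    by rewrite a b ?orbT.
- case/or4P => [/IHl/andP[a b]|/IHr/andP[a b]|/andP[/sl a /sr b]|/andP[/sr a /sl b]];
    by rewrite a b ?orbT.
Qed.

Lemma hTS_n0 t : 0 < #|hTS t|.
Proof.
elim: t => [x|o l IHl r IHr] /=; first by rewrite cards1.
case: o => //=; apply: leq_trans IHl _; apply: subset_leq_card; exact: subsetUl.
Qed.

Lemma wf_sub (v T : dtree V) : is_node v T -> wf_tree T -> wf_tree v.
Proof.
elim: T => [x|o l IHl r IHr] /=; first by case=> // ->.
case=> [->//|[/IHl H|/IHr H]] /and3P[? ? ?]; auto.
Qed.

Lemma kfeasibleP t k S : kfeasible t k S <-> exists X p, feas t k S X p.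
Proof.
split.
  case/and3P => s1 s2 /existsP[X /and3P[s3 /eqP s4 s5]].
  have [p Hp] := pm_invol (@hE_sym t) s5.
  by exists X, p; split.
case=> X [p [s1 s2 s3 s4 s5]]; apply/and3P; split => //.
apply/existsP; exists X; rewrite s3 s4 eqxx /=; exact: invol_pm s5.
Qed.

Lemma feas_odd t k S X p : feas t k S X p -> odd #|S| = odd k.
Proof.
case=> _ _ sX cX ip.
have := pm_even (invol_pm ip).
have XS : X \subset S by apply: subset_trans sX (subsetIl _ _).
rewrite -(cardsID X S) (setIidPr XS) cX oddD.
by case: (odd k); case: (odd _).
Qed.

End Tree.

Section Attach.
Variable V : finType.
Implicit Types (t l r : dtree V) (S X : {set V}).

Lemma hEv l r u w : hE (Node OAttach l r) u w =
  [|| hE l u w, hE r u w, (u \in hTS l) && (w \in hTS r) | (u \in hTS r) && (w \in hTS l)].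
Proof. by []. Qed.

Lemma comb_attach l r k j Sl Xl pl Sr Xr pr :
  [disjoint hV l & hV r] -> 0 < k + j ->
  feas l (k + j) Sl Xl pl -> feas r j Sr Xr pr ->
  exists X p, feas (Node OAttach l r) k (Sl :|: Sr) X p.
Proof.
move=> dis kj0 [sSl dSl sXl cXl iXl] [sSr dSr sXr cXr iXr].
have inl x : x \in hV l -> x \in hV r = false by move=> h; exact: disjointFr dis h.
have inr x : x \in hV r -> x \in hV l = false by move=> h; exact: disjointFl dis h.
have LR x : x \in hV l -> x \in hV r -> False by move=> a b; rewrite inl in b.
have XlS x : x \in Xl -> (x \in Sl) && (x \in hTS l).
  by move=> h; have := subsetP sXl x h; rewrite inE.
have XrS x : x \in Xr -> (x \in Sr) && (x \in hTS r).
  by move=> h; have := subsetP sXr x h; rewrite inE.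
have SlV x : x \in Sl -> x \in hV l by move/(subsetP sSl).
have SrV x : x \in Sr -> x \in hV r by move/(subsetP sSr).
have AV x : x \in hTS l -> x \in hV l by move/(subsetP (hTS_sub l)).
have BV x : x \in hTS r -> x \in hV r by move/(subsetP (hTS_sub r)).
set sl := enum Xl; set sr := enum Xr.
have usl : uniq sl by apply: enum_uniq.
have usr : uniq sr by apply: enum_uniq.
have szl : size sl = k + j by rewrite -cXl cardE.
have szr : size sr = j by rewrite -cXr cardE.
set dl := drop k sl.
have udl : uniq dl by apply: drop_uniq.
have szd : size dl = j by rewrite size_drop szl addKn.
have dlXl x : x \in dl -> x \in Xl by move/mem_drop; rewrite mem_enum.
have srXr x : x \in sr -> x \in Xr by rewrite mem_enum.
have tkXl x : x \in take k sl -> x \in Xl by move/mem_take; rewrite mem_enum.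
have tkdl x : x \in take k sl -> x \in dl -> False.
  move=> h1 h2; move: usl; rewrite -(cat_take_drop k sl) cat_uniq => /and3P[_ /hasP H _].
  by apply: H; exists x.
pose X := [set x in take k sl].
pose q x := if x \in dl then nth x sr (index x dl) else if x \in sr then nth x dl (index x sr)
            else if x \in hV l then pl x else pr x.
have F1 x : x \in dl -> q x \in sr /\ q (q x) = x.
  move=> xd; have ix : index x dl < j by rewrite -szd index_mem.
  have qs : q x \in sr by rewrite /q xd mem_nth // szr.
  have qnd : q x \in dl = false.
    apply/negbTE/negP => h; apply: (LR (q x)); last exact: SrV _ (andP (XrS _ (srXr _ qs))).1.
    exact: SlV _ (andP (XlS _ (dlXl _ h))).1.
  split => //; rewrite {1}/q qnd qs /q xd index_uniq ?szr //.
  by rewrite (set_nth_default x) ?szd // nth_index.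
have F2 y : y \in sr -> q y \in dl /\ q (q y) = y.
  move=> ys; have iy : index y sr < j by rewrite -szr index_mem.
  have ynd : y \in dl = false.
    apply/negbTE/negP => h; apply: (LR y); last exact: SrV _ (andP (XrS _ (srXr _ ys))).1.
    exact: SlV _ (andP (XlS _ (dlXl _ h))).1.
  have qd : q y \in dl by rewrite /q ynd ys mem_nth // szd.
  split => //; rewrite {1}/q qd /q ynd ys index_uniq ?szd //.
  by rewrite (set_nth_default y) ?szr // nth_index.
have F3 z : z \in Sl :\: Xl -> q z = pl z.
  rewrite inE /q => /andP[zX zS].
  have -> : z \in dl = false by apply/negbTE/negP => /dlXl; rewrite (negbTE zX).
  have -> : z \in sr = false.
    by apply/negbTE/negP => /srXr/XrS/andP[/SrV zr _]; exact: LR z (SlV _ zS) zr.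
  by rewrite SlV.
have F4 z : z \in Sr :\: Xr -> q z = pr z.
  rewrite inE /q => /andP[zX zS].
  have -> : z \in dl = false.
    by apply/negbTE/negP => /dlXl/XlS/andP[/SlV zl _]; exact: LR z zl (SrV _ zS).
  have -> : z \in sr = false by apply/negbTE/negP => /srXr; rewrite (negbTE zX).
  by rewrite inr ?SrV.
have XVl x : x \in X -> x \in hV l by rewrite inE => /tkXl/XlS/andP[/SlV].
have memSX z : z \in (Sl :|: Sr) :\: X ->
    [\/ z \in dl, z \in sr, z \in Sl :\: Xl | z \in Sr :\: Xr].
  rewrite !inE => /andP[zX /orP[zS|zS]].
    case zXl: (z \in Xl); last by apply: Or43; rewrite ?zS.
    apply: Or41; move: zXl; rewrite -mem_enum -/sl -{1}(cat_take_drop k sl) mem_cat.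
    by case/orP => // h; move: zX; rewrite h.
  case zXr: (z \in Xr); last by apply: Or44; rewrite ?zS.
  by apply: Or42; rewrite mem_enum.
have SXmem z : [\/ z \in dl, z \in sr, z \in Sl :\: Xl | z \in Sr :\: Xr] ->
    z \in (Sl :|: Sr) :\: X.
  rewrite !inE; case=> [h|h|/andP[h1 h2]|/andP[h1 h2]].
  - rewrite (andP (XlS _ (dlXl _ h))).1 andbT; apply/negP => h'; exact: tkdl h' h.
  - have zr := SrV _ (andP (XrS _ (srXr _ h))).1.
    rewrite (andP (XrS _ (srXr _ h))).1 orbT andbT.
    by apply/negP => /tkXl/XlS/andP[/SlV]; rewrite inr.
  - by rewrite h2 andbT; apply/negP => /tkXl; rewrite (negbTE h1).
  - by rewrite h2 orbT andbT; apply/negP => /tkXl/XlS/andP[/SlV]; rewrite inr ?SrV.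
exists X, q; split.
- by rewrite /=; apply: setUSS.
- apply/subsetP => z; rewrite /closed_nbhd /= !inE => /andP[zA zV]; rewrite zV /=.
  case/orP: zV => [zl|zr].
  + have := subsetP dSl z; rewrite /closed_nbhd !inE zA zl /= => /(_ isT) /orP[zS|/existsP[y /andP[yS ey]]].
      by rewrite zS.
    by apply/orP; right; apply/existsP; exists y; rewrite !inE yS /= ey.
  + case zB: (z \in hTS r).
      have /card_gt0P[x0 x0X] : 0 < #|Xl| by rewrite cXl.
      have /andP[x0S x0A] := XlS _ x0X.
      apply/orP; right; apply/existsP; exists x0; rewrite !inE x0S /= x0A.
      by rewrite !orbT.
    have := subsetP dSr z; rewrite /closed_nbhd !inE zB zr /= => /(_ isT) /orP[zS|/existsP[y /andP[yS ey]]].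
      by rewrite zS orbT.
    by apply/orP; right; apply/existsP; exists y; rewrite !inE yS orbT /= ey orbT.
- apply/subsetP => x; rewrite inE => /tkXl/XlS/andP[h1 h2].
  by rewrite !inE h1 h2.
- rewrite /X cardsE; have /card_uniqP -> := take_uniq k usl.
  by rewrite size_takel // szl leq_addr.
move=> z /memSX [zd|zs|zl|zr].
- have [qs qq] := F1 z zd; split => //.
  + by apply: SXmem; apply: Or42.
  + apply/negP => /eqP e; move: qs; rewrite e => /srXr/XrS/andP[/SrV h _].
    exact: LR z (SlV _ (andP (XlS _ (dlXl _ zd))).1) h.
  + by rewrite hEv (andP (XlS _ (dlXl _ zd))).2 (andP (XrS _ (srXr _ qs))).2 !orbT.
- have [qd qq] := F2 z zs; split => //.
  + by apply: SXmem; apply: Or41.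
  + apply/negP => /eqP e; move: qd; rewrite e => /dlXl/XlS/andP[/SlV h _].
    exact: LR z h (SrV _ (andP (XrS _ (srXr _ zs))).1).
  + by rewrite hEv (andP (XlS _ (dlXl _ qd))).2 (andP (XrS _ (srXr _ zs))).2 !orbT.
- have [h1 h2 h3 h4] := iXl z zl; rewrite (F3 z zl); split => //.
  + by apply: SXmem; apply: Or43.
  + by rewrite hEv h3.
  + by rewrite (F3 _ h1) h4.
- have [h1 h2 h3 h4] := iXr z zr; rewrite (F4 z zr); split => //.
  + by apply: SXmem; apply: Or44.
  + by rewrite hEv h3 orbT.
  + by rewrite (F4 _ h1) h4.
Qed.
End Attach.

Section Split.
Variable V : finType.
Implicit Types (t l r : dtree V) (S X : {set V}).

Lemma cardsU_dis (A B : {set V}) : (forall x, x \in A -> x \in B -> False) ->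
  #|A :|: B| = #|A| + #|B|.
Proof.
move=> H; rewrite cardsU.
have -> : A :&: B = set0.
  by apply/setP => x; rewrite !inE; apply/negP => /andP[a b]; exact: H x a b.
by rewrite cards0 subn0.
Qed.

Lemma split_attach l r k S X p :
  [disjoint hV l & hV r] -> feas (Node OAttach l r) k S X p ->
  exists j Sl Xl Sr Xr, [/\ feas l (k + j) Sl Xl p, feas r j Sr Xr p & #|S| = #|Sl| + #|Sr|].
Proof.
move=> dis [sS dS sX cX ip].
have inl x : x \in hV l -> x \in hV r = false by move=> h; exact: disjointFr dis h.
have LR x : x \in hV l -> x \in hV r -> False by move=> a b; rewrite inl in b.
have AV x : x \in hTS l -> x \in hV l by move/(subsetP (hTS_sub l)).
have BV x : x \in hTS r -> x \in hV r by move/(subsetP (hTS_sub r)).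
have EL x y : x \in hV l -> y \in hV l -> hE (Node OAttach l r) x y -> hE l x y.
  move=> xl yl; rewrite hEv => /or4P[//|/hE_in/andP[xr _]|/andP[_ /BV yr]|/andP[/BV xr _]].
  - by case: (LR x).
  - by case: (LR y).
  - by case: (LR x).
have ER x y : x \in hV r -> y \in hV r -> hE (Node OAttach l r) x y -> hE r x y.
  move=> xr yr; rewrite hEv => /or4P[/hE_in/andP[xl _]|//|/andP[/AV xl _]|/andP[_ /AV yl]].
  - by case: (LR x).
  - by case: (LR x).
  - by case: (LR y).
have ELR x y : x \in hV l -> y \in hV r -> hE (Node OAttach l r) x y ->
    (x \in hTS l) && (y \in hTS r).
  move=> xl yr; rewrite hEv => /or4P[/hE_in/andP[_ yl]|/hE_in/andP[xr _]|//|/andP[/BV xr _]].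
  - by case: (LR y).
  - by case: (LR x).
  - by case: (LR x).
have SV z : z \in S -> (z \in hV l) || (z \in hV r).
  by move/(subsetP sS); rewrite /= inE.
have XS x : x \in X -> (x \in S) && (x \in hTS l).
  by move/(subsetP sX); rewrite inE.
pose Sl := S :&: hV l; pose Sr := S :&: hV r.
pose C := [set x in Sl :\: X | p x \in hV r].
pose Xl := X :|: C; pose Xr := p @: C.
have CSX x : x \in C -> x \in S :\: X.
  by rewrite !inE => /andP[/andP[-> /andP[-> _]] _].
have CV x : x \in C -> (x \in hV l) && (p x \in hV r).
  by rewrite !inE => /andP[/andP[_ /andP[_ ->]] ->].
have CA x : x \in C -> (x \in hTS l) && (p x \in hTS r).
  move=> xC; have [_ _ e _] := ip x (CSX x xC).
  by have /andP[a b] := CV x xC; apply: ELR.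
have pinj : {in C &, injective p}.
  move=> x y /CSX xS /CSX yS e.
  by have [_ _ _ <-] := ip x xS; have [_ _ _ <-] := ip y yS; rewrite e.
exists #|C|, Sl, Xl, Sr, Xr; split.
- split.
  + exact: subsetIr.
  + apply/subsetP => z; rewrite /closed_nbhd !inE => /andP[zA zl].
    have := subsetP dS z; rewrite /closed_nbhd /= !inE zA zl /= => /(_ isT)
      /orP[zS|/existsP[y /andP[yS ey]]]; first by rewrite ?zl zS ?orbT.
    apply/orP; right; apply/existsP; exists y.
    move: yS; rewrite ?inE => yS.
    have : (y \in hV l) || (y \in hV r) by apply: SV.
    case/orP => [yl|yr].
      by rewrite yS yl /=; apply: EL.
    by move: zA; rewrite (andP (ELR z y zl yr ey)).1.
  + apply/subsetP => x; rewrite in_setU => /orP[/XS/andP[xS xA]|xC].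
      by rewrite !inE xS xA AV.
    have /andP[xA _] := CA x xC.
    by move: xC; rewrite !inE xA => /andP[/and3P[_ -> ->] _].
  + rewrite cardsU_dis ?cX // => x xX /CSX; rewrite inE xX.
    done.
  + move=> x; rewrite !inE => /andP[/norP[xX xC] /andP[xS xl]].
    have xSX : x \in S :\: X by rewrite inE xX xS.
    have [h1 h2 h3 h4] := ip x xSX.
    have [pS pX] := setDP h1.
    have pl : p x \in hV l.
      have /orP[//|pr] := SV (p x) pS.
      by move: xC; rewrite xX xS xl pr.
    split => //.
    * by rewrite (negbTE pX) pS pl h4 inl.
    * by apply: EL.
- split.
  + exact: subsetIr.
  + apply/subsetP => z; rewrite /closed_nbhd !inE => /andP[zB zr].
    have zA : z \notin hTS l by apply/negP => /AV zl; case: (LR z).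
    have := subsetP dS z; rewrite /closed_nbhd /= !inE (negbTE zA) zr orbT /= => /(_ isT)
      /orP[zS|/existsP[y /andP[yS ey]]]; first by rewrite ?zr zS ?orbT.
    apply/orP; right; apply/existsP; exists y.
    move: yS; rewrite ?inE => yS.
    have : (y \in hV l) || (y \in hV r) by apply: SV.
    case/orP => [yl|yr].
      have ey' : hE (Node OAttach l r) y z by rewrite hE_sym hEv (negbTE zA).
      by move: zB; rewrite (andP (ELR y z yl zr ey')).2.
    by rewrite yS yr /=; apply: ER => //; rewrite hEv (negbTE zA).
  + apply/subsetP => y /imsetP[x xC ->].
    have [h1 _ _ _] := ip x (CSX x xC).
    by rewrite !inE (andP (CA x xC)).2 (andP (CV x xC)).2 (setDP h1).1.
  + by rewrite card_in_imset.
  + move=> y; rewrite !inE => /andP[yXr /andP[yS yr]].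
    have yX : y \notin X by apply/negP => /XS/andP[_ /AV yl]; case: (LR y).
    have ySX : y \in S :\: X by rewrite inE yX yS.
    have [h1 h2 h3 h4] := ip y ySX.
    have [pS pX] := setDP h1.
    have pr : p y \in hV r.
      have /orP[pl|//] := SV (p y) pS.
      have pC : p y \in C by rewrite !inE h4 yr pX pS pl.
      by move: yXr; rewrite -{1}h4 imset_f.
    split => //.
    * rewrite pS pr andbT /= /Xr andbT.
      apply/negP => /imsetP[x xC e].
      have yx : y = x by rewrite -h4 e; have [_ _ _ ->] := ip x (CSX x xC).
      by have /andP[xl _] := CV x xC; case: (LR x) => //; rewrite -yx.
    * by apply: ER.
- have e : Sl :|: Sr = S.
    apply/setP => z; rewrite !inE.
    by case zS: (z \in S) => //=; apply: SV.
  rewrite -cardsU_dis ?e //.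
  by move=> x; rewrite !inE => /andP[_ a] /andP[_ b]; case: (LR x).
Qed.
End Split.

Section Fin.
Variable V : finType.
Implicit Types (t l r : dtree V) (S X : {set V}).

Lemma hE_l (o : op) l r x y : hE l x y -> hE (Node o l r) x y.
Proof. by case: o => /= ->. Qed.
Lemma hE_r (o : op) l r x y : hE r x y -> hE (Node o l r) x y.
Proof. by case: o => /= ->; rewrite ?orbT. Qed.

Lemma hV_node (o : op) l r : hV (Node o l r) = hV l :|: hV r.
Proof. by []. Qed.

Lemma hTS_tf (o : op) l r : o <> OAttach -> hTS (Node o l r) = hTS l :|: hTS r.
Proof. by case: o. Qed.

Lemma comb_tf (o : op) l r k1 k2 Sl Xl pl Sr Xr pr : o <> OAttach -> [disjoint hV l & hV r] ->
  feas l k1 Sl Xl pl -> feas r k2 Sr Xr pr ->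
  exists p, feas (Node o l r) (k1 + k2) (Sl :|: Sr) (Xl :|: Xr) p.
Proof.
move=> oA dis [sSl dSl sXl cXl iXl] [sSr dSr sXr cXr iXr].
have inl x : x \in hV l -> x \in hV r = false by move=> h; exact: disjointFr dis h.
have inr x : x \in hV r -> x \in hV l = false by move=> h; exact: disjointFl dis h.
have LR x : x \in hV l -> x \in hV r -> False by move=> a b; rewrite inl in b.
have SlV x : x \in Sl -> x \in hV l by move/(subsetP sSl).
have SrV x : x \in Sr -> x \in hV r by move/(subsetP sSr).
have XlS x : x \in Xl -> (x \in Sl) && (x \in hTS l).
  by move=> h; have := subsetP sXl x h; rewrite inE.
have XrS x : x \in Xr -> (x \in Sr) && (x \in hTS r).
  by move=> h; have := subsetP sXr x h; rewrite inE.
exists (fun x => if x \in hV l then pl x else pr x); split.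
- by rewrite /=; apply: setUSS.
- rewrite hTS_tf //; apply/subsetP => z; rewrite /closed_nbhd hV_node !inE => /andP[/norP[zA zB] zV].
  rewrite zV /=; case/orP: zV => [zl|zr].
  + have := subsetP dSl z; rewrite /closed_nbhd !inE zA zl /= => /(_ isT) /orP[zS|/existsP[y /andP[yS ey]]].
      by rewrite zS.
    by apply/orP; right; apply/existsP; exists y; rewrite !inE yS; case: (o) oA => //= _; rewrite ey ?orbT.
  + have := subsetP dSr z; rewrite /closed_nbhd !inE zB zr /= => /(_ isT) /orP[zS|/existsP[y /andP[yS ey]]].
      by rewrite zS orbT.
    by apply/orP; right; apply/existsP; exists y; rewrite !inE yS orbT; case: (o) oA => //= _; rewrite ey ?orbT.
- rewrite hTS_tf //; apply/subsetP => x; rewrite !inE => /orP[/XlS/andP[-> ->]|/XrS/andP[-> ->]] //.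
  by rewrite !orbT.
- rewrite cardsU_dis ?cXl ?cXr // => x /XlS/andP[/SlV a _] /XrS/andP[/SrV b _]; case: (LR x a b).
- move=> z; rewrite !inE => /andP[/norP[zXl zXr] /orP[zS|zS]].
  + have zl := SlV z zS; rewrite zl.
    have zSX : z \in Sl :\: Xl by rewrite inE zXl zS.
    have [h1 h2 h3 h4] := iXl z zSX.
    have [pS pX] := setDP h1.
    have pl' := SlV _ pS.
    split => //.
    * rewrite pS (negbTE pX) /= andbT; apply/negP => /XrS/andP[/SrV b _]; exact: LR _ pl' b.
    * exact: hE_l.
    * by rewrite pl'.
  + have zr := SrV z zS; rewrite inr //.
    have zSX : z \in Sr :\: Xr by rewrite inE zXr zS.
    have [h1 h2 h3 h4] := iXr z zSX.
    have [pS pX] := setDP h1.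
    have pr' := SrV _ pS.
    split => //.
    * rewrite pS (negbTE pX) orbF orbT andbT; apply/negP => /XlS/andP[/SlV b _]; exact: LR _ b pr'.
    * exact: hE_r.
    * by rewrite inr.
Qed.

Lemma fin t : wf_tree t -> forall k, k <= #|hTS t| -> exists S X p, feas t k S X p.
Proof.
elim: t => [x|o l IHl r IHr] /=.
  move=> _ k; rewrite cards1; case: k => [_|[_|//]].
    exists set0, set0, id; split => //; rewrite ?setDv ?sub0set ?cards0 //.
    by move=> z; rewrite inE.
  exists [set x], [set x], id; split => //; rewrite ?setDv ?sub0set ?setIid ?cards1 //.
  by move=> z; rewrite inE.
case/and3P => wl wr dis k.
have tf : forall o', o' <> OAttach -> k <= #|hTS (Node o' l r)| ->
    exists S X p, feas (Node o' l r) k S X p.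
  move=> o' oA.
  rewrite hTS_tf // cardsU_dis => [kAB|x a b]; last first.
    have := subsetP (hTS_sub l) x a; have := subsetP (hTS_sub r) x b.
    by move=> h1 h2; rewrite (disjointFr dis h2) in h1.
  have [Sl [Xl [pl Fl]]] := IHl wl (minn k #|hTS l|) (geq_minr _ _).
  have h2 : k - minn k #|hTS l| <= #|hTS r| by lia.
  have [Sr [Xr [pr Fr]]] := IHr wr (k - minn k #|hTS l|) h2.
  have [p Fv] := comb_tf oA dis Fl Fr.
  exists (Sl :|: Sr), (Xl :|: Xr), p.
  by have -> : k = minn k #|hTS l| + (k - minn k #|hTS l|) by lia.
case: o => [||] kA; [exact: tf|exact: tf|].
rewrite /= in kA.
case: (ltnP k #|hTS l|) => kl.
  have h1 : k + 1 <= #|hTS l| by rewrite addn1.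
  have [Sl [Xl [pl Fl]]] := IHl wl (k + 1) h1.
  have [Sr [Xr [pr Fr]]] := IHr wr 1 (hTS_n0 r).
  have h3 : 0 < k + 1 by rewrite addn1.
  have [X [p Fv]] := comb_attach dis h3 Fl Fr.
  by exists (Sl :|: Sr), X, p.
have kE : k = #|hTS l| by apply/eqP; rewrite eqn_leq kA kl.
have h1 : k + 0 <= #|hTS l| by rewrite addn0.
have [Sl [Xl [pl Fl]]] := IHl wl (k + 0) h1.
have [Sr [Xr [pr Fr]]] := IHr wr 0 (leq0n _).
have h3 : 0 < k + 0 by rewrite addn0 kE hTS_n0.
have [X [p Fv]] := comb_attach dis h3 Fl Fr.
by exists (Sl :|: Sr), X, p.
Qed.

Lemma hgamma_le t k S : kfeasible t k S -> hgamma t k <= #|S|.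
Proof. by move=> h; apply: bigmin_le. Qed.

Lemma gam_wit t k : wf_tree t -> k <= #|hTS t| ->
  exists S X p, feas t k S X p /\ hgamma t k = #|S|.
Proof.
move=> wt kn; have [S0 [X0 [p0 F0]]] := fin wt kn.
have K0 : kfeasible t k S0 by apply/kfeasibleP; exists X0, p0.
have := hgamma_le K0.
rewrite /hgamma; case: (bigmin_att (fun S => kfeasible t k S) (fun S => #|S|) #|V|.+1) => [->|[S [KS ->]]].
  by rewrite ltnNge max_card.
move=> _; have [X [p FS]] := (kfeasibleP t k S).1 KS.
by exists S, X, p.
Qed.

End Fin.

Section Main.
Variable V : finType.
Implicit Types (t l r : dtree V) (S X : {set V}).

Lemma hmin_le t k : k <= #|hTS t| -> hmin t <= hgamma t k.
Proof.
move=> kn; have kn' : k < #|hTS t|.+1 by [].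
exact: (@bigmin_le _ (fun _ => true) (fun i : 'I_#|hTS t|.+1 => hgamma t i) _ (Ordinal kn')).
Qed.

Lemma hmin_att t : exists k, k <= #|hTS t| /\ hgamma t k = hmin t.
Proof.
rewrite /hmin; case: (bigmin_att (fun _ => true) (fun i : 'I_#|hTS t|.+1 => hgamma t i) #|V|.+1)
  => [e|[i [_ ->]]]; last by exists i; split => //; rewrite -ltnS.
exists 0; split => //; apply/eqP; rewrite eqn_leq -/(hmin t).
have := hmin_le (leq0n #|hTS t|); rewrite /hmin e => ->; rewrite andbT.
exact: bigmin_le_idx.
Qed.

Lemma halpha_char t c : c <= #|hTS t| -> hgamma t c = hmin t ->
  (forall k, k < c -> hgamma t k != hmin t) -> halpha t = c.
Proof.
move=> cn hc H; have cn' : c < #|hTS t|.+1 by [].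
apply/eqP; rewrite eqn_leq; apply/andP; split.
  apply: (@bigmin_le _ (fun k : 'I_#|hTS t|.+1 => hgamma t k == hmin t) (fun k => val k) _ (Ordinal cn')).
  by rewrite /= hc.
apply: bigmin_geq => // i /eqP hi; rewrite leqNgt; apply/negP => ic.
by have := H i ic; rewrite hi eqxx.
Qed.

Lemma hbeta_char t c : c <= #|hTS t| -> hgamma t c = hmin t ->
  (forall k, c < k -> k <= #|hTS t| -> hgamma t k != hmin t) -> hbeta t = c.
Proof.
move=> cn hc H; have cn' : c < #|hTS t|.+1 by [].
apply/eqP; rewrite eqn_leq; apply/andP; split.
  apply/bigmax_leqP => i /eqP hi; rewrite leqNgt; apply/negP => ci.
  by have := H i ci (ltn_ord i); rewrite hi eqxx.
apply: (@leq_bigmax_cond _ (fun k : 'I_#|hTS t|.+1 => hgamma t k == hmin t) (fun k => val k) (Ordinal cn')).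
by rewrite /= hc.
Qed.

Lemma halpha_spec t : [/\ halpha t <= #|hTS t|, hgamma t (halpha t) = hmin t &
  forall k, k <= #|hTS t| -> hgamma t k = hmin t -> halpha t <= k].
Proof.
have [k0 [k0n hk0]] := hmin_att t.
have ex : exists k, (k <= #|hTS t|) && (hgamma t k == hmin t) by exists k0; rewrite k0n hk0 eqxx.
case: (ex_minnP ex) => c /andP[cn /eqP hc] minc.
rewrite (halpha_char cn hc) => [|k kc]; last first.
  apply/negP => /eqP hk; have := minc k.
  by rewrite (ltnW (leq_trans kc cn)) hk eqxx => /(_ isT); rewrite leqNgt kc.
split => // k kn hk; apply: minc; by rewrite kn hk eqxx.
Qed.

Lemma hbeta_spec t : [/\ hbeta t <= #|hTS t|, hgamma t (hbeta t) = hmin t &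
  forall k, k <= #|hTS t| -> hgamma t k = hmin t -> k <= hbeta t].
Proof.
have [k0 [k0n hk0]] := hmin_att t.
have ex : exists k, (k <= #|hTS t|) && (hgamma t k == hmin t) by exists k0; rewrite k0n hk0 eqxx.
have bd : forall k, (k <= #|hTS t|) && (hgamma t k == hmin t) -> k <= #|hTS t|.
  by move=> k /andP[].
case: (ex_maxnP ex bd) => c /andP[cn /eqP hc] maxc.
rewrite (hbeta_char cn hc) => [|k ck kn]; last first.
  apply/negP => /eqP hk; have := maxc k.
  by rewrite kn hk eqxx => /(_ isT); rewrite leqNgt ck.
split => // k kn hk; apply: maxc; by rewrite kn hk eqxx.
Qed.

Lemma gam_odd t k : wf_tree t -> k <= #|hTS t| -> odd (hgamma t k) = odd k.
Proof.
move=> wt kn; have [S [X [p [F ->]]]] := gam_wit wt kn; exact: feas_odd F.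
Qed.

Lemma Zchar t x : wf_tree t -> propP t -> x <= #|hTS t| ->
  (hgamma t x = hmin t <-> [/\ halpha t <= x, x <= hbeta t & odd x = odd (halpha t)]).
Proof.
move=> wt Pt xn.
have [an ha amin] := halpha_spec t.
have [bn hb bmax] := hbeta_spec t.
split.
  move=> hx; split; [exact: amin|exact: bmax|].
  by rewrite -(gam_odd wt xn) hx -ha (gam_odd wt an).
case=> ax xb px.
case: (ltngtP x (halpha t)) => [xa'|xa|e]; first by move: ax; rewrite leqNgt xa'.
  2: by rewrite e.
case: (ltngtP x (hbeta t)) => [xb'|bx|e]; [|by move: xb; rewrite leqNgt bx|by rewrite e].
have [_ _ H _] := Pt x xn.
apply: H; first by rewrite xa xb'.
by rewrite oddB ?(ltnW xa) // px addbb.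
Qed.

Lemma feas_k_le t k S X p : feas t k S X p -> k <= #|hTS t|.
Proof.
case=> _ _ sX <- _; apply: subset_leq_card; exact: subset_trans sX (subsetIr _ _).
Qed.

Lemma feas_gam t k S X p : feas t k S X p -> hgamma t k <= #|S|.
Proof. by move=> F; apply: hgamma_le; apply/kfeasibleP; exists X, p. Qed.

End Main.

Unset Implicit Arguments.
Set Strict Implicit.

Theorem lemma31 (V : finType) (e : rel V) (T vl vr : dtree V) :
  simple_graph e -> distance_hereditary e -> decomp_tree e T ->
  is_node (Node OAttach vl vr) T ->
  propP vl -> propP vr ->
  halpha vr <= hbeta vl ->
  ~ (halpha vl = 0 /\ hbeta vr = 0) ->
  ~ (halpha vr = 0 /\ hbeta vl = 0) ->
  halpha (Node OAttach vl vr) =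
    (if hbeta vr < halpha vl then halpha vl - hbeta vr
     else (if halpha vl <= halpha vr then halpha vr - halpha vl
           else halpha vl - halpha vr) %% 2).
Proof.
move=> _ _ [wT _ _] isn P1 P2 h1 h2 h3.
have wv := wf_sub isn wT.
have /and3P[wl wr dis] := wv.
set v := Node OAttach vl vr in wv *.
have hTSv : hTS v = hTS vl by [].
set n1 := #|hTS vl|; set n2 := #|hTS vr|.
set m1 := hmin vl; set m2 := hmin vr.
move: h1 h2 h3.
set a1 := halpha vl; set b1 := hbeta vl; set a2 := halpha vr; set b2 := hbeta vr.
move=> h1 h2 h3.
have [a1n ha1 _] := halpha_spec vl.
have [b1n hb1 _] := hbeta_spec vl.
have [a2n ha2 _] := halpha_spec vr.
have [b2n hb2 _] := hbeta_spec vr.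
have Z1 x : x <= n1 -> (hgamma vl x = m1 <-> [/\ a1 <= x, x <= b1 & odd x = odd a1]).
  exact: Zchar.
have Z2 x : x <= n2 -> (hgamma vr x = m2 <-> [/\ a2 <= x, x <= b2 & odd x = odd a2]).
  exact: Zchar.
have ab1 : a1 <= b1 by have [-> _ _] := (Z1 b1 b1n).1 hb1.
have ab2 : a2 <= b2 by have [-> _ _] := (Z2 b2 b2n).1 hb2.
have n1p : 0 < n1 by apply: hTS_n0.
have gel x : x <= n1 -> m1 <= hgamma vl x by apply: hmin_le.
have ger x : x <= n2 -> m2 <= hgamma vr x by apply: hmin_le.
have hv_lb k : k <= n1 -> exists j, [/\ k + j <= n1, j <= n2 & hgamma vl (k + j) + hgamma vr j <= hgamma v k].
  move=> kn; have [S [X [p [FS hS]]]] := gam_wit wv kn.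
  have [j [Sl [Xl [Sr [Xr [Fl Fr eS]]]]]] := split_attach dis FS.
  exists j; split; [exact: feas_k_le Fl|exact: feas_k_le Fr|].
  by rewrite hS eS; apply: leq_add; [exact: feas_gam Fl|exact: feas_gam Fr].
have hv_ge k : k <= n1 -> m1 + m2 <= hgamma v k.
  move=> kn; have [j [kj jn H]] := hv_lb k kn.
  by apply: leq_trans H; apply: leq_add; [apply: gel|apply: ger].
have hv_eq k : k <= n1 -> hgamma v k = m1 + m2 ->
    exists j, [/\ k + j <= n1, j <= n2, hgamma vl (k + j) = m1 & hgamma vr j = m2].
  move=> kn hk; have [j [kj jn H]] := hv_lb k kn.
  have := gel _ kj; have := ger _ jn.
  by exists j; split => //; lia.
have hv_att x j : x <= n1 -> j <= n2 -> j <= x -> 0 < x -> hgamma vl x = m1 ->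
    hgamma vr j = m2 -> hgamma v (x - j) <= m1 + m2.
  move=> xn jn jx x0 fx gj.
  have [Sl [Xl [pl [Fl hl]]]] := gam_wit wl xn.
  have [Sr [Xr [pr [Fr hr]]]] := gam_wit wr jn.
  have Fl' : feas vl (x - j + j) Sl Xl pl by rewrite subnK.
  have x0' : 0 < x - j + j by rewrite subnK.
  have [X [p Fv]] := comb_attach dis x0' Fl' Fr.
  apply: leq_trans (feas_gam Fv) _.
  rewrite -fx -gj hl hr cardsU; lia.
have b10 : 0 < b1.
  by rewrite lt0n; apply/negP => /eqP b0; apply: h3; split => //; move: h1; rewrite b0; lia.
have hminv : hmin v = m1 + m2.
  have [k' [k'n hk']] := hmin_att v.
  apply/eqP; rewrite eqn_leq; apply/andP; split; last by rewrite -hk'; apply: hv_ge.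
  apply: leq_trans (hmin_le (_ : b1 - a2 <= #|hTS v|)) _; first by rewrite hTSv -/n1; lia.
  exact: hv_att.
have Hchar c : c <= n1 -> hgamma v c <= m1 + m2 -> (forall k, k < c -> hgamma v k != m1 + m2) ->
    halpha v = c.
  move=> cn hc H; apply: halpha_char => //; rewrite hminv //.
  by apply/eqP; rewrite eqn_leq hc hv_ge.
case: ltnP => Hab.
  apply: Hchar; first by lia.
    by apply: hv_att => //; lia.
  move=> k kc; apply/negP => /eqP hk.
  have [j [kj jn fkj gj]] := hv_eq k (ltac:(lia)) hk.
  have [Z11 _ _] := (Z1 _ kj).1 fkj.
  have [_ Z22 _] := (Z2 _ jn).1 gj.
  lia.
case: (boolP (odd a1 == odd a2)) => par.
  move/eqP: par => P.
  rewrite par4 //.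
  have Hz : hgamma v 0 <= m1 + m2; last by apply: Hchar => //; move=> k; rewrite ltn0.
  case: (leqP a1 a2) => aa.
    case: (posnP a2) => a20.
      have a10 : a1 = 0 by lia.
      have b12 : 2 <= b1.
        apply: par0; last by move=> b0; apply: h3.
        by have [_ _ ->] := (Z1 b1 b1n).1 hb1; rewrite a10.
      have b22 : 2 <= b2.
        apply: par0; last by move=> b0; apply: h2.
        by have [_ _ ->] := (Z2 b2 b2n).1 hb2; rewrite a20.
      have -> : 0 = 2 - 2 by [].
      have x1 : 2 <= n1 by lia.
      have x2 : 2 <= n2 by lia.
      apply: (hv_att 2 2) => //.
        by apply/(Z1 2 x1).2; split => //; rewrite a10.
      by apply/(Z2 2 x2).2; split => //; rewrite a20.
    have -> : 0 = a2 - a2 by rewrite subnn.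
    have x1 : a2 <= n1 by lia.
    apply: (hv_att a2 a2) => //.
    by apply/(Z1 a2 x1).2; split => //.
  have -> : 0 = a1 - a1 by rewrite subnn.
  have x1 : a1 <= n2 by lia.
  have x2 : 0 < a1 by lia.
  apply: (hv_att a1 a1) => //.
  by apply/(Z2 a1 x1).2; split => //; lia.
have P : odd a1 = ~~ odd a2 by move: par; case: (odd a1); case: (odd a2).
clear par.
rewrite par5 //.
apply: Hchar => //.
  case: (ltngtP a2 a1) => aa.
  - have -> : 1 = a1 - (a1 - 1) by lia.
    have x1 : a1 - 1 <= n2 by lia.
    have x2 : a1 - 1 <= a1 by lia.
    have x3 : 0 < a1 by lia.
    apply: (hv_att a1 (a1 - 1)) => //.
    apply/(Z2 (a1 - 1) x1).2; split; [lia|lia|].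
    by apply: par1.
  - have -> : 1 = (a2 + 1) - a2 by lia.
    have PB1 : odd b1 = odd a1 by have [_ _ ->] := (Z1 b1 b1n).1 hb1.
    have a2b1 : a2 + 1 <= b1 by apply: (par2 PB1 P).
    have x1 : a2 + 1 <= n1 by lia.
    have x2 : a2 <= a2 + 1 by lia.
    apply: (hv_att (a2 + 1) a2) => //; first by rewrite addn1.
    apply/(Z1 (a2 + 1) x1).2; split; [lia|lia|].
    by apply: par3.
  - by move: P; rewrite aa; case: (odd a1).
move=> k; rewrite ltnS leqn0 => /eqP ->; apply/negP => /eqP hk.
have [j [kj jn fkj gj]] := hv_eq 0 (leq0n _) hk.
have [_ _ p1] := (Z1 _ kj).1 fkj.
have [_ _ p2] := (Z2 _ jn).1 gj.
by move: P; rewrite -p1 -p2 add0n; case: (odd j).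
Qed.
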